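(* For every $C>1$ there are $\varepsilon>0$ and $n_C\in\mathbb N$ such that the following holds. If $G=(V_1,V_2,E)$ is a $C$-bipartite-Ramsey graph with $|V_1|\ge|V_2|/2\ge n_C$, then either $V_1$ contains an $\varepsilon$-pair-star of size $|V_1|^{0.5}$, or $V_1$ contains an $\varepsilon$-pair-matching of size $|V_1|^{0.5}$.
   Context: A bipartite graph $G=(V_1,V_2,E)$ has vertex set $V_1\sqcup V_2$ and edge set $E\subset V_1\times V_2$; $N(v)$ is the neighbourhood and $d(v)$ the degree of $v$. Given $C>0$, $G$ is $C$-bipartite-Ramsey if for all integers $t_1\ge C\log_2|V_1|$, $t_2\ge C\log_2|V_2|$ there are no $T_1\subset V_1$, $T_2\subset V_2$ with $|T_1|=t_1$, $|T_2|=t_2$ such that all pairs in $T_1\times T_2$ are edges, or all are non-edges. For $u,v\in V_1$, $\mathrm{div}(u,v)=N(u)\triangle N(v)$ and $\mathrm{divb}(u,v)$ is the larger of $N(u)\setminus N(v)$, $N(v)\setminus N(u)$ (either if equal). Ordered pairs $\mathbf p=(u,v)$ of distinct vertices are written so that $\mathrm{divb}(\mathbf p)=N(u)\setminus N(v)$, and $d_{\mathbf p}:=d(u)-d(v)$. An $\varepsilon$-pair-star of size $k$ (associated to $V_1$) rooted at $x_0$ is a set $\{x_0,x_1,\ldots,x_k\}\subset V_1$ with $|d(x_j)-d(x_0)|\le|V_2|^{0.5}$ for all $j\in[k]$ and $|\mathrm{div}(x_i,x_j)|\ge\varepsilon|V_2|$ for all $i\ne j$ in $\{0,\ldots,k\}$.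 An $\varepsilon$-pair-matching of size $k$ (associated to $V_1$) is a collection of pairwise vertex-disjoint ordered pairs $\mathbf p_i=(x_i,y_i)$, $i\in[k]$, of vertices of $V_1$ with $d_{\mathbf p_i}\le|V_2|^{0.5}$ for all $i$, and $|\mathrm{divb}(\mathbf p_i)\setminus N(x_j)|\ge\varepsilon|V_2|$ and $|\mathrm{divb}(\mathbf p_i)\setminus N(y_j)|\ge\varepsilon|V_2|$ for all $i\ne j$ in $[k]$. Floors/ceilings of non-integer sizes are ignored. *)

(* Defs.v *)
From HB Require Import structures.
From mathcomp Require Import all_boot all_order all_algebra.
From mathcomp Require Import reals exp Rstruct.
Set Implicit Arguments. Unset Strict Implicit. Unset Printing Implicit Defensive.
Import Order.TTheory GRing.Theory Num.Theory.
Local Open Scope ring_scope.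

Notation RR := Rdefinitions.R.

Definition log2 (x : RR) : RR := ln x / ln 2.

Section Bip.
Variables (V1 V2 : finType) (E : V1 -> V2 -> bool).

Definition nbh (v : V1) : {set V2} := [set w | E v w].
Definition deg (v : V1) : nat := #|nbh v|.

Definition bip_ramsey (C : RR) : Prop :=
  forall t1 t2 : nat,
    C * log2 #|V1|%:R <= t1%:R -> C * log2 #|V2|%:R <= t2%:R ->
    ~ (exists (T1 : {set V1}) (T2 : {set V2}),
          #|T1| = t1 /\ #|T2| = t2 /\
          ((forall x y, x \in T1 -> y \in T2 -> E x y) \/
           (forall x y, x \in T1 -> y \in T2 -> ~~ E x y))).

Definition divs (u v : V1) : {set V2} :=
  (nbh u :\: nbh v) :|: (nbh v :\: nbh u).

(* An ordered pair (u,v) is written so that divb(u,v) = N(u) \ N(v),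
   i.e. |N(u)\N(v)| >= |N(v)\N(u)|. *)
Definition well_ordered_pair (u v : V1) : bool :=
  (#|nbh v :\: nbh u| <= #|nbh u :\: nbh v|)%N.
Definition divb_ord (u v : V1) : {set V2} := nbh u :\: nbh v.
Definition dpair (u v : V1) : int := (deg u)%:Z - (deg v)%:Z.

(* eps-pair-star of size k rooted at x 0: vertices x 0, ..., x k *)
Definition pair_star (eps : RR) (k : nat) (x : 'I_k.+1 -> V1) : Prop :=
  injective x /\
  (forall j : 'I_k.+1,
      `|(deg (x j))%:R - (deg (x ord0))%:R| <= Num.sqrt (#|V2|%:R : RR)) /\
  (forall i j : 'I_k.+1, i != j -> eps * #|V2|%:R <= (#|divs (x i) (x j)|)%:R).

Definition pair_matching (eps : RR) (k : nat) (x y : 'I_k -> V1) : Prop :=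
  (forall i, x i != y i) /\
  (forall i j, i != j -> [/\ x i != x j, y i != y j & x i != y j]) /\
  (forall i, well_ordered_pair (x i) (y i)) /\
  (forall i, ((dpair (x i) (y i))%:~R : RR) <= Num.sqrt (#|V2|%:R : RR)) /\
  (forall i j, i != j ->
     eps * #|V2|%:R <= (#|divb_ord (x i) (y i) :\: nbh (x j)|)%:R /\
     eps * #|V2|%:R <= (#|divb_ord (x i) (y i) :\: nbh (y j)|)%:R).

End Bip.

(* Main.v *)
Require Import Defs.
From HB Require Import structures.
From mathcomp Require Import all_boot all_order all_algebra.
From mathcomp Require Import reals exp Rstruct.
From mathcomp Require Import zify.
Import Order.TTheory GRing.Theory Num.Theory.
Local Open Scope ring_scope.

Set Implicit Arguments. Unset Strict Implicit. Unset Printing Implicit Defensive.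
Local Open Scope nat_scope.

Lemma expP A f : 32 * (A + 6) <= f -> A * f.+1 <= 2 ^ (f %/ 16).
Proof.
move=> hf.
have h1 : f.+1 <= 32 * (f %/ 32).+1 by lia.
have h2 : (f %/ 32).+1 <= 2 ^ (f %/ 32) by exact: ltn_expl.
have h3 : A <= 2 ^ A by exact: ltnW (ltn_expl _ _).
have : A * f.+1 <= 2 ^ A * (2 ^ 5 * 2 ^ (f %/ 32)).
  apply: leq_mul => //; apply: (leq_trans h1); rewrite leq_mul2l; apply/orP; right; exact: h2.
rewrite -!expnD => /leq_trans; apply; rewrite leq_exp2l //; lia.
Qed.

Lemma bernoulli_nat a n : (a - n) * a ^ n <= a * (a - 1) ^ n.
Proof.
elim: n => [|n IH]; first by rewrite !expn0 subn0.
case: (leqP a n) => han.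
  have -> : a - n.+1 = 0 by lia. by [].
have h : (a - n.+1) * a <= (a - n) * (a - 1) by nia.
rewrite expnS (expnS (a-1)).
apply: (@leq_trans ((a - n) * (a - 1) * a ^ n)).
  by rewrite mulnA leq_mul2r h orbT.
move: IH; set X := a ^ n; set Y := (a - 1) ^ n => IH; nia.
Qed.
Lemma card_sep (X : finType) (A : {set X}) (P : pred X) :
  #|[set b in A | P b]| = \sum_(b in A) (P b : nat).
Proof.
rewrite -sum1_card big_mkcond [RHS]big_mkcond /=; apply: eq_bigr => b _.
by rewrite !inE; case: (b \in A); case: (P b).
Qed.

Lemma indep (X : finType) (r : rel X) (D : nat) (A : {set X}) :
  (forall a, a \in A -> #|[set b in A | r a b]| <= D) ->
  exists I : {set X}, [/\ I \subset A,
     (forall a b, a \in I -> b \in I -> a != b -> ~~ r a b) & #|A| <= D.*2.+1 * #|I|].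
Proof.
have [n] := ubnP #|A|; elim: n A => // n IH A hA hdeg.
have [A0|[a0 a0A]] := set_0Vmem A.
  exists set0; split; rewrite ?sub0set ?A0 ?cards0 //.
  by move=> a b; rewrite inE.
pose out a := [set b in A | r a b].
pose inn a := [set b in A | r b a].
have hsum : \sum_(a in A) #|inn a| = \sum_(a in A) #|out a|.
  rewrite /inn /out; under eq_bigr do rewrite card_sep.
  rewrite exchange_big /=; apply: eq_bigr => b _; by rewrite card_sep.
have [a [aA ha]] : exists a, a \in A /\ #|out a| + #|inn a| <= D.*2.
  case: (boolP [exists a in A, #|out a| + #|inn a| <= D.*2]).
    by case/exists_inP=> a aA h; exists a.
  move/exists_inPn=> hn; exfalso.
  have h1 : \sum_(a in A) D.*2.+1 <= \sum_(a in A) (#|out a| + #|inn a|).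
    by apply: leq_sum => a aA; rewrite ltnNge hn.
  rewrite big_split /= hsum sum_nat_const in h1.
  have h2 : \sum_(a in A) #|out a| <= \sum_(a in A) D by apply: leq_sum => a aA; apply: hdeg.
  rewrite sum_nat_const in h2.
  have : 0 < #|A| by apply/card_gt0P; exists a0.
  nia.
pose A' := A :\: (a |: (out a :|: inn a)).
have hA'A : A' \subset A by apply: subsetDl.
have haA' : a \notin A' by rewrite !inE eqxx.
have hA'lt : #|A'| < n.
  suff : #|A'| < #|A| by lia.
  apply: proper_card; apply/properP; split=> //; by exists a.
have [I' [hI'A' hI'ind hI'c]] : exists I' : {set X}, [/\ I' \subset A',
     (forall a b, a \in I' -> b \in I' -> a != b -> ~~ r a b) & #|A'| <= D.*2.+1 * #|I'|].
  apply: IH hA'lt _ => b bA'.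
  apply: leq_trans (hdeg b (subsetP hA'A b bA')).
  apply: subset_leq_card; apply/subsetP => c; rewrite inE => /andP[cA' h].
  by rewrite inE h andbT; exact: (subsetP hA'A).
exists (a |: I'); split.
- by rewrite subUset sub1set aA (subset_trans hI'A' hA'A).
- have hnot : forall b, b \in I' -> ~~ r a b /\ ~~ r b a.
    move=> b /(subsetP hI'A'); rewrite /A' !inE negb_or => /andP[/andP[_ hb] bA].
    by move: hb; rewrite bA /= negb_or => /andP[-> ->].
  move=> b c; rewrite !inE => /orP[/eqP->|hb] /orP[/eqP->|hc]; rewrite ?eqxx //.
  + by move=> _; case: (hnot c hc).
  + by move=> _; case: (hnot b hb).
  + exact: hI'ind.
- rewrite cardsU1 (negbTE (contra (subsetP hI'A' a) haA')) add1n mulnS.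
  have : #|A| <= #|A'| + (1 + (#|out a| + #|inn a|)).
    rewrite /A' cardsD.
    have : #|A :&: (a |: (out a :|: inn a))| <= 1 + (#|out a| + #|inn a|).
      apply: leq_trans (subset_leq_card (subsetIr _ _)) _.
      rewrite cardsU1; apply: leq_add; first by case: (a \in _).
      by apply: leq_card_setU.
    have := subset_leq_card (subsetIl A (a |: (out a :|: inn a))). lia.
  lia.
Qed.
Lemma card_split (X : finType) (A : {set X}) (P : pred X) :
  #|[set b in A | P b]| + #|[set b in A | ~~ P b]| = #|A|.
Proof.
rewrite !card_sep -big_split -sum1_card /=; apply: eq_bigr => b _; by case: (P b).
Qed.

Section Greedy.
Variables (V1 V2 : finType) (E : V1 -> V2 -> bool).

Definition TY (T : {set V1}) (Y : {set V2}) := [set v in T | Y \subset [set y | E v y]].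

Lemma greedy (q : nat) (S : {set V2}) (T : {set V1}) : 0 < q ->
  (forall v, v \in T -> (2 * q) * #|[set y in S | ~~ E v y]| <= #|S|) ->
  forall k, 2 * k <= #|S| -> exists Y : {set V2},
    [/\ Y \subset S, #|Y| = k & #|T| * (q - 1) ^ k <= #|TY T Y| * q ^ k].
Proof.
move=> q0 hT; elim=> [|k IH] hk.
  exists set0; split; rewrite ?sub0set ?cards0 ?expn0 ?muln1 //.
  apply: subset_leq_card; apply/subsetP => v vT; by rewrite inE vT sub0set.
have [Y [YS Yc Yinv]] := IH (ltac:(lia) : 2 * k <= #|S|).
pose R := S :\: Y.
have hR : #|R| = #|S| - k by rewrite /R cardsD (setIidPr YS) Yc.
pose A := TY T Y.
pose cnt y := #|[set v in A | ~~ E v y]|.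
have hsum : \sum_(y in R) cnt y = \sum_(v in A) #|[set y in R | ~~ E v y]|.
  rewrite /cnt; under eq_bigr do rewrite card_sep.
  rewrite exchange_big /=; apply: eq_bigr => v _; by rewrite card_sep.
have hsum2 : (2 * q) * \sum_(v in A) #|[set y in R | ~~ E v y]| <= #|A| * #|S|.
  rewrite big_distrr /= -sum_nat_const; apply: leq_sum => v vA.
  have vT : v \in T by move: vA; rewrite inE => /andP[].
  apply: leq_trans (hT v vT); rewrite leq_mul2l; apply/orP; right.
  apply: subset_leq_card; apply/subsetP => y; rewrite !inE => /andP[/andP[_ yS] ->].
  by rewrite yS.
have [y yR hy] : exists2 y, y \in R & q * cnt y <= #|A|.
  case: (boolP [exists y in R, q * cnt y <= #|A|]); first by case/exists_inP=> y ? ?; exists y.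
  move/exists_inPn=> hn; exfalso.
  have h1 : \sum_(y in R) #|A|.+1 <= \sum_(y in R) q * cnt y.
    by apply: leq_sum => y yR; rewrite ltnNge hn.
  rewrite -big_distrr /= hsum sum_nat_const in h1.
  move: h1 hsum2; set sm := \sum_(v in A) _ => h1 hsum2.
  have h3 : #|A| * #|S| <= #|A| * (2 * #|R|) by rewrite leq_mul2l; apply/orP; right; lia.
  have h4 : 0 < #|R| by lia.
  nia.
have yY : y \notin Y by move: yR; rewrite inE => /andP[].
have yS : y \in S by move: yR; rewrite inE => /andP[].
exists (y |: Y); split.
- by rewrite subUset sub1set yS YS.
- by rewrite cardsU1 yY Yc.
have -> : TY T (y |: Y) = [set v in A | E v y].
  apply/setP => v; rewrite !inE subUset sub1set inE.
  by case: (v \in T); case: (E v y); case: (Y \subset _).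
have hsplit := card_split A (fun v => E v y).
rewrite -/(cnt y) in hsplit.
move: Yinv hy hsplit; rewrite !expnS.
set a := #|[set v in A | E v y]|; set c := cnt y; set X := (q - 1) ^ k; set Z := q ^ k.
rewrite -/A => Yinv hy hsplit.
have h2 : (q - 1) * #|A| <= q * a by lia.
nia.
Qed.
End Greedy.
Section Stage1.
Variables (V : finType) (close : rel V) (bucket : V -> nat) (nb L : nat) (wo : rel V).
Hypotheses (cl_refl : forall u, close u u) (cl_sym : forall u v, close u v = close v u)
  (cl_card : forall u, #|[set w | close u w]| <= L) (hbk : forall u, bucket u < nb)
  (wo_tot : forall u v, wo u v || wo v u).

Lemma stuck_bound (B : {set V}) :
  (forall u, u \in B -> #|[set w in B | bucket w == bucket u]| <= L) -> #|B| <= nb * L.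
Proof.
move=> hB.
pose p (w : V) : 'I_nb := Ordinal (hbk w).
rewrite -sum1_card (partition_big p predT) //=.
rewrite -[X in X * L]card_ord -sum_nat_const; apply: leq_sum => j _.
case: (pickP [pred w in B | p w == j]) => [w0 /andP[w0B /eqP hw0]|h0].
- apply: leq_trans (hB w0 w0B); rewrite -sum1_card; apply: eq_leq; apply: eq_bigl => w.
  by rewrite !inE -hw0 /p; congr (_ && _); apply/eqP/eqP => [->//|h]; apply: val_inj.
- rewrite big1 // => w /andP[wB hw]; by have := h0 w; rewrite /= wB hw.
Qed.

Lemma stage1 (B : {set V}) : exists Q : {set V * V},
  [/\ (forall p, p \in Q -> [/\ p.1 \in B, p.2 \in B, ~~ close p.1 p.2, bucket p.1 = bucket p.2 & wo p.1 p.2]),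
      (forall p q, p \in Q -> q \in Q -> p != q -> [/\ p.1 != q.1, p.2 != q.2 & p.1 != q.2])
    & #|B| <= 2 * #|Q| + nb * L].
Proof.
have [n] := ubnP #|B|; elim: n B => // n IH B hB.
case: (boolP [exists u in B, L < #|[set w in B | bucket w == bucket u]|]); last first.
  move/exists_inPn=> hn.
  exists set0; split; [by move=> p; rewrite inE | by move=> p q; rewrite inE | ].
  rewrite cards0 muln0 add0n; apply: stuck_bound => u uB; by rewrite leqNgt hn.
case/exists_inP => u uB hu.
have [v vB hv] : exists2 v, v \in [set w in B | bucket w == bucket u] & ~~ close u v.
  case: (boolP [exists v in [set w in B | bucket w == bucket u], ~~ close u v]).
    by case/exists_inP=> v ? ?; exists v.
  move/exists_inPn=> hn; exfalso.
  have : #|[set w in B | bucket w == bucket u]| <= L.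
    apply: leq_trans (cl_card u); apply: subset_leq_card; apply/subsetP => w hw.
    by rewrite inE; have := hn w hw; rewrite negbK.
  by rewrite leqNgt hu.
move: vB; rewrite inE => /andP[vB /eqP hbuv].
have vu : v != u by apply: contraNneq hv => ->; rewrite cl_refl.
pose p := if wo u v then (u, v) else (v, u).
have hp : [/\ p.1 \in B, p.2 \in B, ~~ close p.1 p.2, bucket p.1 = bucket p.2 & wo p.1 p.2].
  rewrite /p; case: ifP => /= h; split=> //; rewrite 1?cl_sym //.
  by have := wo_tot u v; rewrite h.
pose B' := B :\ u :\ v.
have hB'B : B' \subset B by apply/subsetP => x; rewrite /B' !inE => /and3P[].
have hpB' : forall x, x \in B' -> x != p.1 /\ x != p.2.
  move=> x; rewrite /B' !inE => /and3P[xv xu _].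
  by rewrite /p; case: ifP => _ /=; split.
have hB'c : #|B| = (#|B'|).+2.
  rewrite /B' (cardsD1 u B) uB (cardsD1 v (B :\ u)) !inE vu vB; lia.
have [Q' [hQ'1 hQ'2 hQ'3]] := IH B' (ltac:(lia)).
have pQ' : p \notin Q'.
  apply/negP => /hQ'1 [h1 _ _ _ _]; by case: (hpB' _ h1); rewrite eqxx.
exists (p |: Q'); split.
- move=> q; rewrite in_setU1 => /orP[/eqP->//|/hQ'1 [h1 h2 h3 h4 h5]]; split=> //;
  exact: (subsetP hB'B).
- have hx : forall q, q \in Q' -> [/\ p.1 != q.1, p.2 != q.2, p.1 != q.2 & q.1 != p.2].
    move=> q /hQ'1 [h1 h2 _ _ _].
    case: (hpB' _ h1) => a1 a2; case: (hpB' _ h2) => b1 b2.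
    by split=> //; rewrite eq_sym.
  move=> q r; rewrite !in_setU1 => /orP[/eqP->|hq] /orP[/eqP->|hr]; rewrite ?eqxx //.
  + by move=> _; case: (hx r hr).
  + by move=> _; case: (hx q hq) => a1 a2 a3 a4; split=> //; rewrite eq_sym.
  + exact: hQ'2.
- rewrite cardsU1 pQ'; lia.
Qed.
End Stage1.
Lemma ar2 n L i : 0 < n -> n <= 12 * (L * i) -> 256 * L * L <= n -> n <= i * i.
Proof.
move=> n0 h1 h2.
have h3 : n * n <= 144 * ((L * L) * (i * i)).
  have := leq_mul h1 h1; move=> h; apply: (leq_trans h); lia.
have h4 : 256 * ((L * L) * (i * i)) <= n * (i * i).
  have := leq_mul h2 (leqnn (i * i)); move=> h; apply: leq_trans h; lia.
move: h3 h4; move: (L * L * (i * i)) => Z; move: (i * i) => W => h3 h4.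
have : 256 * (n * n) <= 144 * (n * W) by nia.
move=> h; have : n * (256 * n) <= n * (144 * W) by move: h; rewrite !mulnA (mulnC 256) (mulnC 144).
rewrite leq_pmul2l //; lia.
Qed.

Definition noHom (V1 V2 : finType) (E : V1 -> V2 -> bool) (t1 t2 : nat) :=
  forall (T1 : {set V1}) (T2 : {set V2}), t1 <= #|T1| -> #|T2| = t2 ->
    ~ (forall x y, x \in T1 -> y \in T2 -> E x y).

Lemma few_cover (V1 V2 : finType) (E : V1 -> V2 -> bool) (K t1 c : nat) (S : {set V2}) :
  0 < K -> 0 < c -> noHom E t1 (4 * K * c) -> 2 * (4 * K * c) <= #|S| ->
  #|[set v | 16 * K * #|[set y in S | ~~ E v y]| <= #|S|]| < t1 * 2 ^ c.
Proof.
move=> K0 c0 hnh hS.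
set T := [set v | _].
have [Y [YS Yc Yinv]] := @greedy V1 V2 E (8 * K) S T (ltac:(lia)) 
   (fun v vT => ltac:(move: vT; rewrite inE mulnA; lia)) _ hS.
rewrite ltnNge; apply/negP => hT.
have hb := bernoulli_nat (8 * K) (4 * K).
have hb2 : (8 * K) ^ (4 * K) <= 2 * (8 * K - 1) ^ (4 * K).
  rewrite (_ : 8 * K - 4 * K = 4 * K) in hb; last by lia.
  move: hb; set X := (8 * K) ^ _; set W := (_ - 1) ^ _ => hb. nia.
have hb3 : (8 * K) ^ (4 * K * c) <= 2 ^ c * (8 * K - 1) ^ (4 * K * c).
  rewrite (expnM (8 * K)) (expnM (8 * K - 1)) -expnMn leq_exp2r //.
have hW : 0 < (8 * K - 1) ^ (4 * K * c) by rewrite expn_gt0; apply/orP; left; lia.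
have ht1 : t1 <= #|TY E T Y|.
  move: Yinv hb3 hW hT; set W := (_ - 1) ^ _; set Z := (8 * K) ^ _; set P := 2 ^ c.
  move=> Yinv hb3 hW hT.
  have : t1 * P * W <= #|TY E T Y| * P * W.
    apply: leq_trans (leq_mul hT (leqnn W)) _.
    apply: leq_trans Yinv _. rewrite -mulnA leq_mul2l; apply/orP; right; lia.
  rewrite leq_mul2r => /orP[|]; first by rewrite eqn0Ngt hW.
  rewrite leq_mul2r => /orP[|] //; by rewrite eqn0Ngt expn_gt0.
apply: (hnh _ Y ht1 Yc) => x y; rewrite inE => /andP[_ /subsetP h] /h.
by rewrite inE.
Qed.

Lemma main_nat (V1 V2 : finType) (E : V1 -> V2 -> bool) (K t1 c s : nat) :
  0 < K -> 0 < c -> 0 < t1 -> 0 < s -> s * s <= #|V2| ->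
  noHom E t1 (4 * K * c) -> noHom (fun x y => ~~ E x y) t1 (4 * K * c) ->
  128 * K * (4 * K * c) <= #|V2| ->
  2 * (#|V2| %/ s).+1 * (t1 * 2 ^ c) <= #|V1| ->
  256 * (t1 * 2 ^ c) * (t1 * 2 ^ c) <= #|V1| ->
  exists k (x y : 'I_k -> V1), #|V1| <= k * k /\
   [/\ (forall i, x i != y i),
       (forall i j, i != j -> [/\ x i != x j, y i != y j & x i != y j]),
       (forall i, well_ordered_pair E (x i) (y i)),
       (forall i, deg E (x i) <= deg E (y i) + s) &
       (forall i j, i != j ->
          #|V2| <= 1024 * K * K * #|divb_ord E (x i) (y i) :\: nbh E (x j)| /\
          #|V2| <= 1024 * K * K * #|divb_ord E (x i) (y i) :\: nbh E (y j)|)].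
Proof.
move=> K0 c0 t10 s0 hs hnh hnh' hm hb1 hb2.
set m := #|V2| in hs hm hb1 *; set n := #|V1| in hb1 hb2 *.
set L := t1 * 2 ^ c in hb1 hb2.
have m0 : 0 < m by nia.
have hB : 64 * (4 * K * c) <= m.
  apply: leq_trans hm; apply: leq_mul => //; lia.
pose close u v := 32 * K * #|divs E u v| < m.
have divs_sym u v : divs E u v = divs E v u by rewrite /divs setUC.
have divs_refl u : divs E u u = set0 by rewrite /divs setDv setU0.
have cl_refl u : close u u by rewrite /close divs_refl cards0 muln0.
have cl_sym u v : close u v = close v u by rewrite /close divs_sym.
have cl_card : forall u, #|[set w | close u w]| <= L.
  move=> u; case: (leqP m (2 * #|nbh E u|)) => hu.
  - have h := few_cover (S := nbh E u) K0 c0 hnh (ltac:(lia)).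
    apply: ltnW; apply: leq_ltn_trans h; apply: subset_leq_card; apply/subsetP => w.
    rewrite !inE /close => hw.
    have hX : #|[set y in nbh E u | ~~ E w y]| <= #|divs E u w|.
      apply: subset_leq_card; apply/subsetP => y; rewrite !inE => /andP[h1 h2].
      by rewrite h1 h2.
    have := leq_mul (leqnn (32 * K)) hX; lia.
  - have hc := cardsC (nbh E u); rewrite -/m in hc.
    have h := few_cover (S := ~: nbh E u) K0 c0 hnh' (ltac:(lia)).
    apply: ltnW; apply: leq_ltn_trans h; apply: subset_leq_card; apply/subsetP => w.
    rewrite !inE /close => hw.
    have hX : #|[set y in ~: nbh E u | ~~ ~~ E w y]| <= #|divs E u w|.
      apply: subset_leq_card; apply/subsetP => y; rewrite !inE negbK => /andP[h1 h2].
      by rewrite h1 h2.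
    have := leq_mul (leqnn (32 * K)) hX; lia.
pose bucket u := deg E u %/ s.
have hbk : forall u, bucket u < (m %/ s).+1.
  move=> u; rewrite ltnS /bucket leq_div2r //; exact: max_card.
have wo_tot : forall u v, well_ordered_pair E u v || well_ordered_pair E v u.
  by move=> u v; rewrite /well_ordered_pair leq_total.
have [Q [hQ1 hQ2 hQ3]] := stage1 cl_refl cl_sym cl_card hbk wo_tot [set: V1].
rewrite cardsT -/n in hQ3.
pose D (p : V1 * V1) := nbh E p.1 :\: nbh E p.2.
pose bad p w := 16 * K * #|[set y in D p | ~~ E w y]| <= #|D p|.
pose conf p q := (p != q) && (bad p q.1 || bad p q.2).
have far : forall p, p \in Q -> m <= 64 * K * #|D p|.
  move=> p /hQ1 [_ _ hcl _ hwo].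
  move: hcl; rewrite /close -leqNgt => hcl.
  have h1 : #|divs E p.1 p.2| <= #|D p| + #|nbh E p.2 :\: nbh E p.1|.
    by rewrite /divs; case: (leq_card_setU (D p) (nbh E p.2 :\: nbh E p.1)).
  move: hwo; rewrite /well_ordered_pair => hwo.
  have h2 : #|divs E p.1 p.2| <= 2 * #|D p| by rewrite /D in h1 *; lia.
  have := leq_mul (leqnn (32 * K)) h2; lia.
have hD2 : forall p, p \in Q -> 2 * (4 * K * c) <= #|D p|.
  move=> p /far h.
  have : 64 * K * (2 * (4 * K * c)) <= 64 * K * #|D p|.
    apply: leq_trans h; apply: leq_trans hm; rewrite mulnA (mulnC _ 2) mulnA. lia.
  by rewrite leq_pmul2l //; lia.
have outdeg : forall p, p \in Q -> #|[set q in Q | conf p q]| <= L.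
  move=> p pQ.
  pose f (q : V1 * V1) := if bad p q.1 then q.1 else q.2.
  have hinj : {in [set q in Q | conf p q] &, injective f}.
    move=> q r; rewrite !inE => /andP[qQ _] /andP[rQ _] hf.
    apply/eqP; apply/negPn/negP => hqr.
    have [a1 a2 a3] := hQ2 q r qQ rQ hqr.
    have [b1 b2 b3] := hQ2 r q rQ qQ (ltac:(by rewrite eq_sym)).
    move: hf; rewrite /f; case: ifP => _; case: ifP => _ h.
    + by rewrite h eqxx in a1.
    + by rewrite h eqxx in a3.
    + by rewrite h eqxx in b3.
    + by rewrite h eqxx in a2.
  rewrite -(card_in_imset hinj).
  apply: ltnW; apply: leq_ltn_trans (few_cover (S := D p) K0 c0 hnh (hD2 p pQ)).
  apply: subset_leq_card; apply/subsetP => w /imsetP [q]; rewrite inE => /andP[_ hc] ->.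
  move: hc; rewrite /conf /f => /andP[_]; rewrite inE.
  by case: ifP => // h1 /= h2; rewrite ?mulnA.
have [I [hIQ hIind hIc]] := indep (r := conf) (D := L) outdeg.
have L0 : 0 < L by rewrite /L muln_gt0 t10 expn_gt0.
have hn1 : n <= 12 * (L * #|I|).
  have : n <= 4 * #|Q| by lia.
  have : #|I| <= L * #|I| by rewrite leq_pmull.
  move: hIc; rewrite -mul2n mulSn -mulnA.
  have ar : forall n0 q i LI, q <= i + 2 * LI -> i <= LI -> n0 <= 4 * q -> n0 <= 12 * LI by lia.
  exact: ar.
have hnI : n <= #|I| * #|I|.
  have pos : forall l, 0 < l -> 0 < 256 * l * l by move=> l hl; rewrite !muln_gt0 hl.
  have := pos L L0 => hp.
  have hn0 : 0 < n by lia.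
  exact: (ar2 hn0 hn1 hb2).
exists #|I|, (fun i => (enum_val i).1), (fun i => (enum_val i).2).
split=> //.
have evQ : forall i : 'I_#|I|, enum_val i \in Q.
  by move=> i; apply: (subsetP hIQ); apply: enum_valP.
have evI : forall i : 'I_#|I|, enum_val i \in I by move=> i; apply: enum_valP.
have evne : forall i j : 'I_#|I|, i != j -> enum_val i != enum_val j.
  by move=> i j; apply: contra => /eqP /enum_val_inj ->.
split.
- move=> i; have [_ _ hcl _ _] := hQ1 _ (evQ i).
  by apply: contraNneq hcl => ->; apply: cl_refl.
- by move=> i j hij; apply: hQ2; rewrite ?evQ ?evne.
- by move=> i; have [_ _ _ _ ->] := hQ1 _ (evQ i).
- move=> i; have [_ _ _ hbu _] := hQ1 _ (evQ i).
  move: hbu; rewrite /bucket => hbu.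
  have e1 := divn_eq (deg E (enum_val i).1) s.
  have e2 := divn_eq (deg E (enum_val i).2) s.
  have r1 := ltn_pmod (deg E (enum_val i).1) s0.
  rewrite hbu in e1; lia.
- move=> i j hij.
  have hc := hIind _ _ (evI i) (evI j) (evne i j hij).
  move: hc; rewrite /conf (evne i j hij) /= negb_or /bad -!ltnNge => /andP[h1 h2].
  have hf := far _ (evQ i).
  have eqs : forall w, [set y in D (enum_val i) | ~~ E w y] = D (enum_val i) :\: nbh E w.
    by move=> w; apply/setP => y; rewrite !inE andbC.
  rewrite !eqs in h1 h2.
  rewrite /divb_ord -/(D (enum_val i)).
  move: h1 h2 hf; set X1 := #|_ :\: nbh E (enum_val j).1|; set X2 := #|_ :\: nbh E (enum_val j).2|.
  set d := #|D _| => h1 h2 hf.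
  split.
  + apply: leq_trans hf _. have := leq_mul (leqnn (64 * K)) (ltnW h1). 
    move=> h; apply: leq_trans h _; lia.
  + apply: leq_trans hf _. have := leq_mul (leqnn (64 * K)) (ltnW h2). 
    move=> h; apply: leq_trans h _; lia.
Qed.

Local Open Scope ring_scope.

Lemma sqrt_le_nat (a k : nat) : (a <= k * k)%N -> Num.sqrt (a%:R : RR) <= k%:R.
Proof.
move=> h.
have -> : (k%:R : RR) = Num.sqrt (k%:R ^+ 2).
  by rewrite sqrtr_sqr ger0_norm // ler0n.
rewrite ler_sqrt; last by rewrite exprn_ge0 // ler0n.
by rewrite -natrX ler_nat expnS expn1.
Qed.

Lemma log2_le (N j : nat) : (0 < N)%N -> (N < 2 ^ j)%N -> log2 N%:R <= j%:R.
Proof.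
move=> N0 hN; rewrite /log2.
have l2 : (0 : RR) < ln 2 by apply: ln_gt0; rewrite ltr1n.
rewrite ler_pdivrMr //.
have -> : (j%:R * ln 2 : RR) = ln ((2 : RR) ^+ j) by rewrite lnXn // mulr_natl.
rewrite ler_ln ?posrE ?ltr0n ?exprn_gt0 //.
by rewrite -natrX ler_nat ltnW.
Qed.

Lemma log2_ge0 (N : nat) : (0 < N)%N -> 0 <= log2 N%:R.
Proof.
move=> N0; rewrite /log2 divr_ge0 //; apply: ln_ge0; by rewrite ?ler1n.
Qed.

Lemma noHom_of (V1 V2 : finType) (E : V1 -> V2 -> bool) (C : RR) (t1 t2 : nat) :
  bip_ramsey E C -> C * log2 #|V1|%:R <= t1%:R -> C * log2 #|V2|%:R <= t2%:R ->
  noHom E t1 t2 /\ noHom (fun x y => ~~ E x y) t1 t2.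
Proof.
move=> hR h1 h2; split=> T1 T2 hT1 hT2 hall;
  apply: (hR #|T1| #|T2|); rewrite ?hT2 //;
  try (apply: le_trans h1 _; by rewrite ler_nat);
  exists T1, T2; split=> //; split=> //; [left|right] => //.
Qed.

Unset Implicit Arguments.

Lemma int_sub_le (a b s : nat) : (a <= b + s)%N -> (a%:Z - b%:Z <= s%:Z).
Proof. move=> h; lia. Qed.

Lemma nat_le_sqrt (s m : nat) : (s * s <= m)%N -> (s%:R : RR) <= Num.sqrt (m%:R).
Proof.
move=> h.
have -> : (s%:R : RR) = Num.sqrt (s%:R ^+ 2) by rewrite sqrtr_sqr ger0_norm // ler0n.
rewrite ler_sqrt ?ler0n //.
by rewrite -natrX ler_nat expnS expn1.
Qed.

Theorem lemma3p1 :
  forall C : RR, 1 < C ->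
  exists (eps : RR) (nC : nat), 0 < eps /\
  forall (V1 V2 : finType) (E : V1 -> V2 -> bool),
    bip_ramsey E C ->
    (#|V2|%:R / 2 <= (#|V1|%:R : RR)) -> (nC%:R <= (#|V2|%:R / 2 : RR)) ->
    (exists (k : nat) (x : 'I_k.+1 -> V1),
        Num.sqrt (#|V1|%:R : RR) <= k%:R /\ pair_star E eps x) \/
    (exists (k : nat) (x y : 'I_k -> V1),
        Num.sqrt (#|V1|%:R : RR) <= k%:R /\ pair_matching E eps x y).
Proof.
move=> C C1.
have C0 : (0 : RR) <= C by apply: le_trans (ltW C1); rewrite ler01.
set K := Num.bound C.
have hK : C < K%:R := archi_boundP C0.
have K1 : (1 < K)%N by rewrite -(ltr_nat RR); apply: lt_trans hK.
have K0 : (0 < K)%N by lia.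
have hKK : (K <= K * K)%N by rewrite leq_pmulr.
set F0 := (32 * (1024 * K * K + 6) + 64)%N.
exists ((1024 * K * K)%:R^-1), (2 ^ F0)%N; split.
  by rewrite invr_gt0 ltr0n !muln_gt0 K0.
move=> V1 V2 E hR h1 h2.
have hF0 : F0 = (32 * (1024 * K * K + 6) + 64)%N by [].
set m := #|V2| in h1 h2 *; set n := #|V1| in h1 *.
have hmn : (m <= n * 2)%N.
  by rewrite -(ler_nat RR) natrM -ler_pdivrMr.
have hnC : (2 ^ F0 * 2 <= m)%N.
  by rewrite -(ler_nat RR) natrM -ler_pdivlMr.
have m0 : (0 < m)%N by move: hnC; rewrite -expnSr; have := expn_gt0 2 F0.+1; lia.
have n0 : (0 < n)%N by lia.
set e := trunc_log 2 m; set f := trunc_log 2 n.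
have he1 : (2 ^ e <= m)%N by apply: trunc_logP.
have he2 : (m < 2 ^ e.+1)%N by apply: trunc_log_ltn.
have hf1 : (2 ^ f <= n)%N by apply: trunc_logP.
have hf2 : (n < 2 ^ f.+1)%N by apply: trunc_log_ltn.
have heF : (F0.+1 <= e)%N by apply: trunc_log_max => //; rewrite expnSr.
have hfF : (F0 <= f)%N.
  apply: trunc_log_max => //; move: hnC hmn; rewrite -expnSr expnS; lia.
have hef : (e <= f.+1)%N.
  have : (2 ^ e < 2 ^ f.+2)%N by rewrite expnS; lia.
  by rewrite ltn_exp2l.
set c := (e %/ 4 + 1)%N.
set s := (2 ^ (e %/ 2))%N.
set t1 := (K * f.+1)%N.
have c0 : (0 < c)%N by lia.
have t10 : (0 < t1)%N by rewrite muln_gt0 K0.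
have s0 : (0 < s)%N by rewrite expn_gt0.
have hss : (s * s <= m)%N.
  rewrite -expnD; apply: leq_trans he1; rewrite leq_exp2l //; lia.
have hlogn : C * log2 n%:R <= t1%:R.
  rewrite natrM; apply: le_trans (_ : K%:R * log2 n%:R <= _).
    by apply: ler_wpM2r; [apply: log2_ge0 | apply: ltW].
  by apply: ler_wpM2l; [rewrite ler0n | apply: log2_le].
have hlogm : C * log2 m%:R <= (4 * K * c)%:R.
  rewrite (_ : (4 * K * c)%N = (K * (4 * c))%N); last by lia.
  rewrite natrM; apply: le_trans (_ : K%:R * log2 m%:R <= _).
    by apply: ler_wpM2r; [apply: log2_ge0 | apply: ltW].
  apply: ler_wpM2l; first by rewrite ler0n.
  apply: le_trans (_ : (e.+1)%:R <= _); first by apply: log2_le.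
  rewrite ler_nat; lia.
have [hnh hnh'] := noHom_of hR hlogn hlogm.
have ht1 : (t1 <= 2 ^ (f %/ 16))%N by apply: expP; lia.
have hL : (t1 * 2 ^ c <= 2 ^ (f %/ 16 + c))%N by rewrite expnD leq_mul.
have hA := @expP (512 * K * K)%N e (ltac:(lia)).
have hm : (128 * K * (4 * K * c) <= m)%N.
  apply: leq_trans he1.
  apply: leq_trans (_ : (512 * K * K * e.+1 <= _)%N).
    have : (512 * K * K * c <= 512 * K * K * e.+1)%N by rewrite leq_mul2l; apply/orP; right; lia.
    lia.
  apply: leq_trans hA _; rewrite leq_exp2l //; lia.
have hnb : (2 * (m %/ s).+1 <= 2 ^ (e.+3 - e %/ 2))%N.
  have h3 : (m %/ s <= 2 ^ (e.+1 - e %/ 2))%N.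
    rewrite expnB //; last by lia.
    by apply: leq_div2r; apply: ltnW.
  have h4 := expn_gt0 2 (e.+1 - e %/ 2).
  have -> : (e.+3 - e %/ 2 = (e.+1 - e %/ 2).+2)%N by lia.
  rewrite !expnS; lia.
have hb1 : (2 * (m %/ s).+1 * (t1 * 2 ^ c) <= n)%N.
  apply: leq_trans hf1.
  apply: leq_trans (leq_mul hnb hL) _; rewrite -expnD leq_exp2l //; lia.
have hb2 : (256 * (t1 * 2 ^ c) * (t1 * 2 ^ c) <= n)%N.
  apply: leq_trans hf1.
  apply: leq_trans (leq_mul (leq_mul (leqnn (2 ^ 8)) hL) hL) _.
  rewrite -!expnD leq_exp2l //; lia.
have [k [x [y [hk [hne hdis hwo hdeg hcr]]]]] :=
  main_nat K0 c0 t10 s0 hss hnh hnh' hm hb1 hb2.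
right; exists k, x, y; split; first by apply: sqrt_le_nat.
split=> //; split=> //; split=> //; split.
- move=> i; apply: (le_trans _ (nat_le_sqrt _ _ hss)).
  have : dpair E (x i) (y i) <= s%:Z.
    by rewrite /dpair; apply: int_sub_le; apply: hdeg.
  by rewrite -(ler_int RR).
- move=> i j hij; have [c1 c2] := hcr i j hij.
  by split; rewrite ler_pdivrMl ?ltr0n ?muln_gt0 ?K0 // -natrM ler_nat.
Qed.
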